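(* For every finite set $\Omega$ with $|\Omega|\ge2$, every $\varepsilon>0$ and all integers $k,l\ge1$ there exist $\delta>0$ and $n_0>0$ such that for all $n>n_0$ and all $\mu,\nu\in\mathcal P(\Omega^n)$ with $D_\square(\mu,\nu)<\delta$, every $(k,l)$-intensive observable $f$ satisfies $\big|\langle f(\sigma^{(1)},\dots,\sigma^{(k)})\rangle_\mu-\langle f(\sigma^{(1)},\dots,\sigma^{(k)})\rangle_\nu\big|<\varepsilon$.
   Context: $\mathcal P(\mathcal X)$ denotes the set of probability measures on a finite set $\mathcal X$; $[n]=\{1,\dots,n\}$. A function $f:(\Omega^n)^k\to[0,1]$ is a $(k,l)$-intensive observable if there exist $I_1,\dots,I_l\subset[n]$ and $\tau^{(j)}_1,\dots,\tau^{(j)}_l\in\Omega$ for $j=1,\dots,k$ such that $f(\sigma^{(1)},\dots,\sigma^{(k)})=\frac1{n^l}\sum_{i_1\in I_1,\dots,i_l\in I_l}\prod_{j=1}^k\mathbf 1\{\sigma^{(j)}_{i_1}=\tau^{(j)}_1,\dots,\sigma^{(j)}_{i_l}=\tau^{(j)}_l\}$. For $\mu\in\mathcal P(\Omega^n)$, $\langle f(\sigma^{(1)},\dots,\sigma^{(k)})\rangle_\mu=\sum_{\sigma^{(1)},\dots,\sigma^{(k)}}f(\sigma^{(1)},\dots,\sigma^{(k)})\prod_{j=1}^k\mu(\sigma^{(j)})$ is the expectation over $k$ independent samples from $\mu$. For $\mu,\nu\in\mathcal P(\Omega^n)$ let $\Gamma(\mu,\nu)$ be the set of couplings, i.e. probability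 measures $\gamma$ on $\Omega^n\times\Omega^n$ whose first and second marginals are $\mu$ and $\nu$. The cut metric is $D_\square(\mu,\nu)=\frac1n\min_{\gamma\in\Gamma(\mu,\nu)}\max_{I\subset[n],\,B\subset\Omega^n\times\Omega^n,\,\omega\in\Omega}\Big|\sum_{i\in I}\sum_{(\sigma,\tau)\in B}\gamma(\sigma,\tau)\big(\mathbf 1\{\sigma_i=\omega\}-\mathbf 1\{\tau_i=\omega\}\big)\Big|$. *)

(* Defs.v *)
(* Reals are modelled by an arbitrary Archimedean real closed
   field R (e.g. the real algebraic numbers; every such field embeds in the reals). *)
From HB Require Import structures.
From mathcomp Require Import all_boot all_order all_algebra.
Set Implicit Arguments. Unset Strict Implicit. Unset Printing Implicit Defensive.
Import Order.TTheory GRing.Theory Num.Theory.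
Local Open Scope ring_scope.

Definition config (Omega : finType) (n : nat) := {ffun 'I_n -> Omega}.

Definition is_prob (R : numDomainType) (X : finType) (mu : {ffun X -> R}) : Prop :=
  (forall x, 0 <= mu x) /\ \sum_(x : X) mu x = 1.

(* The (k,l)-intensive observable with index sets I_1..I_l (I m = I_{m+1})
   and spins tau^{(j)}_m (tau j m):
   f(sigma^(1..k)) = n^{-l} sum_{i_1 in I_1,...,i_l in I_l}
                      prod_j 1{sigma^(j)_{i_1}=tau^(j)_1,...,sigma^(j)_{i_l}=tau^(j)_l}. *)
Definition intensive_obs (R : numFieldType) (Omega : finType) (n k l : nat)
    (I : 'I_l -> {set 'I_n}) (tau : 'I_k -> 'I_l -> Omega)
    (sigma : 'I_k -> config Omega n) : R :=
  (n%:R ^+ l)^-1 *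
  \sum_(i : {ffun 'I_l -> 'I_n} | [forall m, i m \in I m])
     \prod_(j < k) ([forall m, sigma j (i m) == tau j m] : bool)%:R.

Definition expect (R : numFieldType) (Omega : finType) (n k : nat)
    (mu : {ffun config Omega n -> R}) (f : ('I_k -> config Omega n) -> R) : R :=
  \sum_(s : {ffun 'I_k -> config Omega n}) f s * \prod_(j < k) mu (s j).

Definition is_coupling (R : numDomainType) (X : finType)
    (mu nu : {ffun X -> R}) (gamma : {ffun (X * X)%type -> R}) : Prop :=
  (forall p, 0 <= gamma p) /\
  (forall x, \sum_(y : X) gamma (x, y) = mu x) /\
  (forall y, \sum_(x : X) gamma (x, y) = nu y).

(* max_{I subset [n], B subset Omega^n x Omega^n, omega in Omega} |...|
   (all terms are >= 0, so the max with neutral element 0 is the max). *)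
Definition cut_value (R : realDomainType) (Omega : finType) (n : nat)
    (gamma : {ffun (config Omega n * config Omega n)%type -> R}) : R :=
  \big[Num.max/0]_(I : {set 'I_n})
   \big[Num.max/0]_(B : {set (config Omega n * config Omega n)%type})
    \big[Num.max/0]_(omega : Omega)
      `| \sum_(i in I) \sum_(p in B)
           gamma p * ((p.1 i == omega)%:R - (p.2 i == omega)%:R) |.

(* D_cut(mu,nu) < delta.  D_cut is (1/n) min over couplings of cut_value;
   the min is attained (finite LP), so D_cut < delta iff some coupling has
   (1/n) * cut_value < delta.  *)
Definition Dcut_lt (R : realFieldType) (Omega : finType) (n : nat)
    (mu nu : {ffun config Omega n -> R}) (delta : R) : Prop :=
  exists gamma, is_coupling mu nu gamma /\ (n%:R)^-1 * cut_value gamma < delta.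

(* Main.v *)
Require Import Defs.
From HB Require Import structures.
From mathcomp Require Import all_boot all_order all_algebra.
From mathcomp Require Import ring lra.
Import Order.TTheory GRing.Theory Num.Theory.
Local Open Scope ring_scope.

Lemma le_bigmax0 (R : realDomainType) (T : finType) (F : T -> R) i0 :
  F i0 <= \big[Num.max/0]_(i : T) F i.
Proof.
have : i0 \in index_enum T by rewrite mem_index_enum.
elim: (index_enum T) => //= a s IH; rewrite big_cons in_cons => /orP [/eqP-> | /IH h].
  by rewrite le_max lexx.
by rewrite le_max h orbT.
Qed.
Arguments le_bigmax0 {R T}.

Lemma sign_bound (R : realDomainType) (T : finType) (g w : T -> R) (C : R) :
  (forall p, 0 <= w p <= 1) ->
  (forall B : {set T}, `|\sum_(p in B) g p| <= C) ->
  `|\sum_p g p * w p| <= C.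
Proof.
move=> w01 hB.
rewrite ler_norml; apply/andP; split.
- have := hB [set p | g p < 0]; rewrite ler_norml => /andP [h _]; apply: le_trans h _.
  rewrite big_mkcond /=; apply: ler_sum => p _; rewrite inE.
  by have := w01 p; case: ifP => gp; nra.
- have := hB [set p | 0 < g p]; rewrite ler_norml => /andP [_ h]; apply: le_trans h.
  rewrite [X in _ <= X]big_mkcond /=; apply: ler_sum => p _; rewrite inE.
  by have := w01 p; case: ifP => gp; nra.
Qed.

Lemma cut_bound (R : realDomainType) (Omega : finType) (n : nat)
  (gamma : {ffun (config Omega n * config Omega n)%type -> R})
  (J : {set 'I_n}) (om : Omega) (w : (config Omega n * config Omega n)%type -> R) :
  (forall p, 0 <= w p <= 1) ->
  `| \sum_p gamma p * (\sum_(i in J) ((p.1 i == om)%:R - (p.2 i == om)%:R)) * w p |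
    <= cut_value gamma.
Proof.
move=> w01; apply: sign_bound => // B.
rewrite /cut_value.
set F3 := fun (I : {set 'I_n}) (B : {set (config Omega n * config Omega n)%type}) (o : Omega) =>
  `| \sum_(i in I) \sum_(p in B) gamma p * ((p.1 i == o)%:R - (p.2 i == o)%:R) |.
apply: le_trans (le_bigmax0 (fun I => \big[Num.max/0]_(B : {set (config Omega n * config Omega n)%type}) \big[Num.max/0]_(o : Omega) F3 I B o) J).
apply: le_trans (le_bigmax0 (fun B => \big[Num.max/0]_(o : Omega) F3 J B o) B).
apply: le_trans (le_bigmax0 (fun o => F3 J B o) om); rewrite /F3.
rewrite exchange_big /=.
by under [X in _ <= `|X|]eq_bigr do rewrite -mulr_sumr.
Qed.

Lemma b01 (R : realFieldType) (Omega : finType) (n : nat) (J : {set 'I_n}) (om : Omega)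
  (s : config Omega n) :
  0 <= (n%:R : R)^-1 * \sum_(i in J) ((s i == om)%:R : R) <= 1.
Proof.
apply/andP; split; first by rewrite mulr_ge0 ?invr_ge0 ?ler0n ?sumr_ge0.
have h : \sum_(i in J) ((s i == om)%:R : R) <= n%:R.
  rewrite big_mkcond /=; apply: le_trans (_ : \sum_(i < n) (1:R) <= _).
    by apply: ler_sum => i _; case: ifP => _ //; case: (s i == om).
  by rewrite sumr_const card_ord.
have h0 : 0 <= (n%:R : R)^-1 by rewrite invr_ge0 ler0n.
apply: le_trans (ler_wpM2l h0 h) _.
case: n {J s h h0} => [|n]; first by rewrite invr0 mul0r.
by rewrite mulVf // pnatr_eq0.
Qed.

Lemma prod_tele (R : comRingType) N (a b : 'I_N -> R) :
  \prod_j a j - \prod_j b j =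
  \sum_(t < N) (a t - b t) * \prod_(j | j != t) (if (j < t)%N then b j else a j).
Proof.
pose P := fun q : nat => \prod_(j < N) (if (j < q)%N then b j else a j).
have P0 : P 0%N = \prod_j a j by apply: eq_bigr.
have PN : P N = \prod_j b j by apply: eq_bigr => j _; rewrite ltn_ord.
rewrite -P0 -PN -opprB -(telescope_sumr _ (leq0n N)) -sumrN big_mkord.
apply: eq_bigr => t _; rewrite opprB /P (bigD1 t) //= ltnn.
rewrite [X in _ - X](bigD1 t) //= ltnSn mulrBl; congr (_ - _ * _).
apply: eq_bigr => j jt; rewrite ltnS leq_eqVlt.
by have -> : (nat_of_ord j == nat_of_ord t) = false by apply/negbTE.
Qed.

Definition bfun (R : realFieldType) (Omega : finType) (n l : nat) (J : 'I_l -> {set 'I_n})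
  (om : 'I_l -> Omega) (m : 'I_l) (s : config Omega n) : R :=
  (n%:R)^-1 * \sum_(i in J m) ((s i == om m)%:R : R).
Arguments bfun R {Omega n l}.
Arguments b01 R {Omega n}.

Lemma one_replica (R : realFieldType) (Omega : finType) (n l : nat)
  (mu nu : {ffun config Omega n -> R}) gamma :
  is_coupling mu nu gamma -> forall (J : 'I_l -> {set 'I_n}) (om : 'I_l -> Omega),
  `| \sum_s mu s * \prod_m bfun R J om m s - \sum_s nu s * \prod_m bfun R J om m s |
    <= l%:R * ((n%:R)^-1 * cut_value gamma).
Proof.
case=> g0 [hmu hnu] J om.
set G := fun s => \prod_m bfun R J om m s.
have E1 : \sum_s mu s * G s = \sum_p gamma p * G p.1.
  transitivity (\sum_s \sum_y gamma (s, y) * G s).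
    by apply: eq_bigr => s _; rewrite -hmu mulr_suml.
  by rewrite pair_big /=; apply: eq_bigr => -[x y] _.
have E2 : \sum_s nu s * G s = \sum_p gamma p * G p.2.
  transitivity (\sum_s \sum_x gamma (x, s) * G s).
    by apply: eq_bigr => s _; rewrite -hnu mulr_suml.
  by rewrite exchange_big pair_big /=; apply: eq_bigr => -[x y] _.
rewrite E1 E2 -sumrB.
set W := fun (m : 'I_l) (p : (config Omega n * config Omega n)%type) =>
  \prod_(j | j != m) (if (j < m)%N then bfun R J om j p.2 else bfun R J om j p.1).
have -> : \sum_p (gamma p * G p.1 - gamma p * G p.2) =
   \sum_m \sum_p gamma p * (bfun R J om m p.1 - bfun R J om m p.2) * W m p.
  rewrite exchange_big; apply: eq_bigr => p _.
  by rewrite -mulrBr /G prod_tele mulr_sumr; apply: eq_bigr => m _; rewrite mulrA.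
apply: le_trans (ler_norm_sum _ _ _) _.
have -> : l%:R * ((n%:R)^-1 * cut_value gamma) = \sum_(m < l) ((n%:R)^-1 * cut_value gamma).
  by rewrite sumr_const card_ord mulr_natl.
apply: ler_sum => m _.
have -> : \sum_p gamma p * (bfun R J om m p.1 - bfun R J om m p.2) * W m p =
  (n%:R)^-1 * \sum_p gamma p * (\sum_(i in J m) ((p.1 i == om m)%:R - (p.2 i == om m)%:R)) * W m p.
  rewrite mulr_sumr; apply: eq_bigr => p _; rewrite /bfun -mulrBr -sumrB; ring.
rewrite normrM ger0_norm ?invr_ge0 ?ler0n //; apply: ler_wpM2l; first by rewrite invr_ge0 ler0n.
apply: cut_bound => p; rewrite /W; apply/andP; split.
  apply: prodr_ge0 => j _; case: ifP => _; [by case/andP: (b01 R (J j) (om j) p.2) | by case/andP: (b01 R (J j) (om j) p.1)].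
apply: prodr_ile1 => j _; case: ifP => _; [exact: b01 | exact: b01].
Qed.

Definition upd (k : nat) (X : finType) (y : {ffun 'I_k -> X}) (t : 'I_k) (x : X) :
  {ffun 'I_k -> X} := [ffun j => if j == t then x else y j].
Arguments upd {k X}.

Lemma prod_bool (R : comRingType) (T : finType) (P : pred T) :
  \prod_(j : T) ((P j)%:R : R) = ([forall j, P j])%:R.
Proof.
case: forallP => [h | /forallP]; first by rewrite big1 // => j _; rewrite h.
rewrite negb_forall => /existsP [j0 hj0]; rewrite (bigD1 j0) //= (negbTE hj0) mul0r //.
Qed.

Lemma if_bool (R : comRingType) (b c : bool) :
  (if b then (c%:R : R) else 0) = (b && c)%:R.
Proof. by case: b. Qed.

Lemma obs_upd (R : realFieldType) (Omega : finType) (n k l : nat)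
    (I : 'I_l -> {set 'I_n}) (tau : 'I_k -> 'I_l -> Omega)
    (y : {ffun 'I_k -> config Omega n}) (t : 'I_k) (x : config Omega n) :
  intensive_obs R I tau (upd y t x) =
  \prod_m bfun R (fun m => [set i in I m | [forall j, (j != t) ==> (y j i == tau j m)]])
     (fun m => tau t m) m x.
Proof.
rewrite /intensive_obs /bfun big_split /= prodr_const card_ord exprVn; congr (_ * _).
rewrite bigA_distr_big_dep big_mkcond [RHS]big_mkcond /=; apply: eq_bigr => i _.
rewrite !prod_bool !if_bool; congr (_%:R); congr (nat_of_bool _).
apply/andP/andP.
- case => /forallP hI /forallP hall; split.
    apply/familyP => m; rewrite inE hI /=; apply/forallP => j; apply/implyP => jt.
    by have := forallP (hall j) m; rewrite ffunE (negbTE jt).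
  apply/forallP => m; by have := forallP (hall t) m; rewrite ffunE eqxx.
- case => /familyP hF /forallP hx; split.
    by apply/forallP => m; have := hF m; rewrite inE => /andP [].
  apply/forallP => j; apply/forallP => m; rewrite ffunE.
  have [-> | jt] := eqVneq j t; first by rewrite ?eqxx; apply: hx.
  by have := hF m; rewrite inE => /andP [_ /forallP /(_ j)]; rewrite jt.
Qed.

Lemma upd_upd (k : nat) (X : finType) (y : {ffun 'I_k -> X}) t x x' :
  upd (upd y t x) t x' = upd y t x'.
Proof. by apply/ffunP => j; rewrite !ffunE; case: (j == t). Qed.

Lemma upd_id (k : nat) (X : finType) (y : {ffun 'I_k -> X}) t :
  upd y t (y t) = y.
Proof. by apply/ffunP => j; rewrite !ffunE; case: eqP => // ->. Qed.

Lemma sum_upd (R : comRingType) (k : nat) (X : finType) (t : 'I_k) (x0 : X)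
    (H : {ffun 'I_k -> X} -> R) :
  \sum_s H s = \sum_(y : {ffun 'I_k -> X} | y t == x0) \sum_x H (upd y t x).
Proof.
rewrite pair_big_dep /=.
rewrite (reindex_onto (fun p : {ffun 'I_k -> X} * X => upd p.1 t p.2)
   (fun s => (upd s t x0, s t)) (P := xpredT)) /=; last by move=> s _; rewrite upd_upd upd_id.
apply: eq_bigl => -[y x] /=; rewrite upd_upd ffunE eqxx.
rewrite andbT xpair_eqE eqxx andbT.
apply/eqP/eqP => [e | e]; first by rewrite -e ffunE eqxx.
by rewrite -{2}(upd_id _ _ y t) e.
Qed.

Lemma sum_weights (R : comRingType) (k : nat) (X : finType) (t : 'I_k) (x0 : X)
    (c : 'I_k -> X -> R) :
  (forall j, \sum_x c j x = 1) ->
  \sum_(y : {ffun 'I_k -> X} | y t == x0) \prod_(j | j != t) c j (y j) = 1.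
Proof.
move=> hc.
transitivity (\sum_(y : {ffun 'I_k -> X}) \prod_j (if j == t then (y j == x0)%:R else c j (y j))).
  rewrite big_mkcond /=; apply: eq_bigr => y _.
  rewrite [RHS](bigD1 t) //= eqxx; case: (y t == x0); rewrite ?mul1r ?mul0r //.
  by apply: eq_bigr => j /negbTE ->.
rewrite -(bigA_distr_bigA (fun j x => if j == t then ((x == x0)%:R : R) else c j x)) /=.
apply: big1 => j _; case: eqP => _ //.
by rewrite (bigD1 x0) //= eqxx big1 ?addr0 // => x /negbTE ->.
Qed.

Lemma multi_bound (R : realFieldType) (Omega : finType) (n k l : nat)
  (mu nu : {ffun config Omega n -> R}) gamma :
  is_coupling mu nu gamma ->
  forall (I : 'I_l -> {set 'I_n}) (tau : 'I_k -> 'I_l -> Omega) (t : 'I_k)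
    (x0 : config Omega n) (c : 'I_k -> {ffun config Omega n -> R}),
  (forall j x, 0 <= c j x) -> (forall j, \sum_x c j x = 1) ->
  `| \sum_(s : {ffun 'I_k -> config Omega n}) intensive_obs R I tau s *
       ((mu (s t) - nu (s t)) * \prod_(j | j != t) c j (s j)) |
   <= l%:R * ((n%:R)^-1 * cut_value gamma).
Proof.
move=> hc I tau t x0 c c0 c1.
rewrite (sum_upd _ _ _ t x0).
set J := fun (y : {ffun 'I_k -> config Omega n}) m =>
  [set i in I m | [forall j, (j != t) ==> (y j i == tau j m)]].
have E : forall y : {ffun 'I_k -> config Omega n},
  \sum_x intensive_obs R I tau (upd y t x) *
     ((mu (upd y t x t) - nu (upd y t x t)) * \prod_(j | j != t) c j (upd y t x j)) =
  \prod_(j | j != t) c j (y j) *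
   (\sum_x mu x * \prod_m bfun R (J y) (fun m => tau t m) m x -
    \sum_x nu x * \prod_m bfun R (J y) (fun m => tau t m) m x).
  move=> y; rewrite -sumrB mulr_sumr; apply: eq_bigr => x _.
  rewrite obs_upd ffunE eqxx.
  have -> : \prod_(j | j != t) c j (upd y t x j) = \prod_(j | j != t) c j (y j).
    by apply: eq_bigr => j /negbTE jt; rewrite ffunE jt.
  rewrite /J; ring.
under eq_bigr do rewrite E.
apply: le_trans (ler_norm_sum _ _ _) _.
apply: le_trans (_ : \sum_(y : {ffun 'I_k -> config Omega n} | y t == x0)
   \prod_(j | j != t) c j (y j) * (l%:R * ((n%:R)^-1 * cut_value gamma)) <= _).
  apply: ler_sum => y _; rewrite normrM ger0_norm ?prodr_ge0 //.
  apply: ler_wpM2l; first by apply: prodr_ge0.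
  exact: one_replica.
by rewrite -mulr_suml (sum_weights _ _ _ t x0 (fun j x => c j x)) // mul1r.
Qed.

Theorem corollary2p7 (R : archiRcfType) (Omega : finType) (HOmega : (1 < #|Omega|)%N)
    (eps : R) (Heps : 0 < eps) (k l : nat) (Hk : (1 <= k)%N) (Hl : (1 <= l)%N) :
  exists delta : R, 0 < delta /\
  exists n0 : nat, (0 < n0)%N /\
  forall n : nat, (n0 < n)%N ->
  forall mu nu : {ffun config Omega n -> R},
    is_prob mu -> is_prob nu -> Dcut_lt mu nu delta ->
  forall (I : 'I_l -> {set 'I_n}) (tau : 'I_k -> 'I_l -> Omega),
    `| expect mu (intensive_obs R I tau) - expect nu (intensive_obs R I tau) | < eps.
Proof.
have kl0 : 0 < ((k * l)%N%:R : R) by rewrite ltr0n muln_gt0 Hk Hl.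
exists (eps / (k * l)%N%:R); split; first by rewrite divr_gt0.
exists 1%N; split => //.
move=> n _ mu nu [mu0 mu1] [nu0 nu1] [gamma [hc hlt]] I tau.
case/card_gt0P: (ltnW HOmega) => o _.
pose x0 : config Omega n := [ffun _ => o].
have E : expect mu (intensive_obs R I tau) - expect nu (intensive_obs R I tau) =
  \sum_(t < k) \sum_(s : {ffun 'I_k -> config Omega n}) intensive_obs R I tau s *
     ((mu (s t) - nu (s t)) *
      \prod_(j | j != t) (if (j < t)%N then nu else mu) (s j)).
  rewrite /expect -sumrB.
  rewrite [RHS]exchange_big /=; apply: eq_bigr => s _.
  rewrite -mulrBr (prod_tele _ _ (fun j => mu (s j)) (fun j => nu (s j))) mulr_sumr.
  apply: eq_bigr => t _; congr (_ * (_ * _)); apply: eq_bigr => j _; by case: ifP.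
rewrite E; apply: le_lt_trans (ler_norm_sum _ _ _) _.
apply: le_lt_trans (_ : \sum_(t < k) (l%:R * ((n%:R)^-1 * cut_value gamma)) < _).
  apply: ler_sum => t _; apply: multi_bound => //.
  - by move=> j x; case: ifP.
  - by move=> j; case: ifP.
rewrite sumr_const card_ord.
have -> : l%:R * ((n%:R)^-1 * cut_value gamma) *+ k = (k * l)%N%:R * ((n%:R)^-1 * cut_value gamma).
  by rewrite -mulr_natl natrM; ring.
rewrite -[X in _ < X](divfK (negbT (gt_eqF kl0))) mulrC.
by rewrite ltr_pM2r.
Qed.
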